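(* Let $G$ be a complete $t$-partite graph with $t\ge2$ parts, at least one of which has size greater than $1$. If $G$ is $\mathcal{C}$-$\mathrm{MH}$, then $t=2$.
   Context: Subgraphs are induced. A homomorphism maps edges to edges; a monomorphism is an injective homomorphism. A graph $G$ is $\mathcal{C}$-$\mathrm{MH}$ if every monomorphism from a finite connected induced subgraph of $G$ into $G$ extends to a homomorphism $G\to G$. *)

(* Defs.v *)
From Stdlib Require Import List Relations.

Definition finite_set {V : Type} (S : V -> Prop) : Prop :=
  exists l : list V, forall x, S x -> In x l.

Definition induced_connected {V : Type} (adj : V -> V -> Prop) (S : V -> Prop) : Prop :=
  forall x y, S x -> S y ->
    clos_refl_trans V (fun a b => S a /\ S b /\ adj a b) x y.

Definition mono_on {V : Type} (adj : V -> V -> Prop) (S : V -> Prop) (f : V -> V) : Prop :=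
  (forall x y, S x -> S y -> f x = f y -> x = y) /\
  (forall x y, S x -> S y -> adj x y -> adj (f x) (f y)).

Definition graph_hom {V : Type} (adj : V -> V -> Prop) (h : V -> V) : Prop :=
  forall x y, adj x y -> adj (h x) (h y).

Definition C_MH {V : Type} (adj : V -> V -> Prop) : Prop :=
  forall (S : V -> Prop) (f : V -> V),
    finite_set S -> induced_connected adj S -> mono_on adj S f ->
    exists h : V -> V, graph_hom adj h /\ (forall x, S x -> h x = f x).

(* p : V -> nat witnesses that G is complete t-partite with parts
   p^-1(0), ..., p^-1(t-1), all nonempty *)
Definition complete_multipartite_by {V : Type} (adj : V -> V -> Prop)
  (t : nat) (p : V -> nat) : Prop :=
  (forall x, p x < t) /\
  (forall i, i < t -> exists x, p x = i) /\
  (forall x y, adj x y <-> p x <> p y).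

(* Main.v *)
Require Import Defs.
From Stdlib Require Import List Relations.
From Stdlib Require Import IndefiniteDescription ClassicalEpsilon Lia Arith PeanoNat.

Lemma nodup_map_inj (q : nat -> nat) (l : list nat) :
  NoDup l -> (forall j k, In j l -> In k l -> q j = q k -> j = k) -> NoDup (map q l).
Proof.
  induction l as [|x l IH]; simpl; intros Hn Hi; constructor.
  - inversion Hn; subst. intro H. apply in_map_iff in H as [y [Hy Hyl]].
    assert (y = x) by (apply Hi; auto). subst. contradiction.
  - inversion Hn; subst. apply IH; auto.
Qed.

Lemma surj_of_inj (t : nat) (q : nat -> nat) :
  (forall j, j < t -> q j < t) ->
  (forall j k, j < t -> k < t -> q j = q k -> j = k) ->
  forall y, y < t -> exists j, j < t /\ q j = y.
Proof.
  intros Hr Hi y Hy.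
  assert (Hinc : incl (seq 0 t) (map q (seq 0 t))).
  { apply NoDup_length_incl.
    - apply nodup_map_inj. apply seq_NoDup.
      intros j k Hj Hk. apply in_seq in Hj; apply in_seq in Hk. apply Hi; lia.
    - rewrite length_map; lia.
    - intros z Hz. apply in_map_iff in Hz as [w [<- Hw]]. apply in_seq in Hw.
      apply in_seq. specialize (Hr w). lia. }
  assert (In y (seq 0 t)) by (apply in_seq; lia).
  apply Hinc in H. apply in_map_iff in H as [w [Hw Hwl]]. apply in_seq in Hwl.
  exists w; split; [lia|auto].
Qed.

Lemma three (t i : nat) : 3 <= t -> i < t ->
  exists j k, j < t /\ k < t /\ j <> i /\ k <> i /\ j <> k.
Proof.
  intros. destruct i as [|[|i]].
  - exists 1, 2; lia.
  - exists 0, 2; lia.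
  - exists 0, 1; lia.
Qed.

Theorem lemma7p2 (V : Type) (adj : V -> V -> Prop) (t : nat) (p : V -> nat) :
  2 <= t ->
  complete_multipartite_by adj t p ->
  (exists x y : V, x <> y /\ p x = p y) ->
  C_MH adj ->
  t = 2.
Proof.
  intros Ht [Hlt [Hex Hadj]] [a [a' [Haa Hpa]]] HC.
  destruct (Nat.eq_dec t 2) as [|Hne]; [assumption|exfalso].
  set (i := p a).
  destruct (three t i ltac:(lia) (Hlt a)) as [j [k [Hj [Hk [Hji [Hki Hjk]]]]]].
  destruct (Hex j Hj) as [b Hb]. destruct (Hex k Hk) as [c Hc].
  assert (Hv : forall n, exists x, n < t -> p x = n).
  { intro n. destruct (Nat.lt_ge_cases n t).
    - destruct (Hex n H) as [x Hx]. exists x; auto.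
    - exists a; intro; lia. }
  destruct (functional_choice _ Hv) as [v Hvp].
  set (S := fun x => x = a \/ x = b \/ x = a').
  set (f := fun x => if excluded_middle_informative (x = a') then c else x).
  assert (Hba' : b <> a') by (intro; subst; lia).
  assert (Hab : adj a b) by (apply Hadj; unfold i in *; lia).
  assert (Hba : adj b a) by (apply Hadj; unfold i in *; lia).
  assert (Ha'b : adj a' b) by (apply Hadj; unfold i in *; lia).
  assert (Hba2 : adj b a') by (apply Hadj; unfold i in *; lia).
  assert (fa : f a = a) by (unfold f; destruct excluded_middle_informative; congruence).
  assert (fb : f b = b) by (unfold f; destruct excluded_middle_informative; congruence).
  assert (fa' : f a' = c) by (unfold f; destruct excluded_middle_informative; congruence).
  destruct (HC S f) as [h [Hh Hhf]].
  - exists (a :: b :: a' :: nil). intros x [ -> | [ -> | -> ] ]; simpl; auto.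
  - assert (Hb2 : forall x, S x -> clos_refl_trans V (fun u w => S u /\ S w /\ adj u w) x b).
    { intros x [ -> | [ -> | -> ] ].
      + apply rt_step. unfold S; auto.
      + apply rt_refl.
      + apply rt_step. unfold S; auto. }
    assert (Hb3 : forall x, S x -> clos_refl_trans V (fun u w => S u /\ S w /\ adj u w) b x).
    { intros x [ -> | [ -> | -> ] ].
      + apply rt_step. unfold S; auto.
      + apply rt_refl.
      + apply rt_step. unfold S; auto. }
    intros x y Hx Hy. eapply rt_trans; [apply Hb2|apply Hb3]; auto.
  - split.
    + intros x y [ -> | [ -> | -> ] ] [ -> | [ -> | -> ] ]; rewrite ?fa, ?fb, ?fa'; intro E;
        try reflexivity; try (subst; lia); try congruence;
        exfalso; try (rewrite E in *; unfold i in *; lia);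
        try (rewrite <- E in *; unfold i in *; lia).
    + intros x y [ -> | [ -> | -> ] ] [ -> | [ -> | -> ] ] E; rewrite ?fa, ?fb, ?fa';
        try (apply Hadj; unfold i in *; lia);
        exfalso; apply Hadj in E; unfold i in *; lia.
  - assert (ha : h a = a) by (rewrite Hhf; unfold S; auto).
    assert (ha' : h a' = c) by (rewrite Hhf; unfold S; auto).
    set (w := fun n => if Nat.eq_dec n i then a else v n).
    set (w' := fun n => if Nat.eq_dec n i then a' else v n).
    assert (Hw : forall n, n < t -> p (w n) = n).
    { intros n Hn. unfold w. destruct Nat.eq_dec as [e|e]; [unfold i in e; lia|auto]. }
    assert (Hw' : forall n, n < t -> p (w' n) = n).
    { intros n Hn. unfold w'. destruct Nat.eq_dec as [e|e]; [unfold i in e; lia|auto]. }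
    set (q := fun n => p (h (w n))).
    set (q' := fun n => p (h (w' n))).
    assert (Hqi : forall n m, n < t -> m < t -> q n = q m -> n = m).
    { intros n m Hn Hm E. destruct (Nat.eq_dec n m); auto. exfalso.
      assert (adj (w n) (w m)) by (apply Hadj; rewrite !Hw; auto).
      apply Hh in H. apply Hadj in H. exact (H E). }
    assert (Hqi' : forall n m, n < t -> m < t -> q' n = q' m -> n = m).
    { intros n m Hn Hm E. destruct (Nat.eq_dec n m); auto. exfalso.
      assert (adj (w' n) (w' m)) by (apply Hadj; rewrite !Hw'; auto).
      apply Hh in H. apply Hadj in H. exact (H E). }
    assert (qi : q i = i) by (unfold q, w; destruct (Nat.eq_dec i i) as [_|e]; [rewrite ha; reflexivity|exfalso; apply e; reflexivity]).
    assert (qi' : q' i = k) by (unfold q', w'; destruct (Nat.eq_dec i i) as [_|e]; [rewrite ha'; auto|exfalso; apply e; reflexivity]).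
    destruct (surj_of_inj t q (fun n _ => Hlt _) Hqi k Hk) as [m [Hm Hqm]].
    assert (m <> i) by (intro E; rewrite E in Hqm; lia).
    assert (q' m = q m) by (unfold q, q', w, w'; destruct (Nat.eq_dec m i) as [e|_]; [exfalso; auto|reflexivity]).
    assert (m = i) by (apply Hqi'; [auto|apply Hlt|congruence]). lia.
Qed.
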